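(* Assume the setting below, with $u_0\in C^7_0[x_l,x_r]$. (i) If $U^0,U^1\in Z^0_h$ are arbitrary and $U^2,\dots,U^N\in Z^0_h$ satisfy the scheme (S), then for all $0\le n\le N-1$, $$E^n:=\frac{\|U^{n+1}\|^2+\|U^n\|^2}{2}+\alpha\frac{\|U^{n+1}_x\|^2+\|U^n_x\|^2}{2}+\lambda\frac{\|U^{n+1}_{x\bar x}\|^2+\|U^n_{x\bar x}\|^2}{2}=E^0.$$ (ii) If moreover $U^0_i=u_0(x_i)$ for $0\le i\le M$ and $U^1\in Z^0_h$ satisfies the starting scheme (CN), then $\|U^1\|^2+\alpha\|U^1_x\|^2+\lambda\|U^1_{x\bar x}\|^2=\|U^0\|^2+\alpha\|U^0_x\|^2+\lambda\|U^0_{x\bar x}\|^2$, and there is a constant $C>0$ independent of $h,\tau,n$ such that $\|U^n\|_\infty\le C$ and $\|U^n_x\|_\infty\le C$ for all $0\le n\le N$.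
   Context: Setting. Fix an integer $m\ge1$, real constants $a,b,c,\nu$, positive constants $\alpha,\lambda$, $x_l<x_r$, $T>0$. $C^7_0[x_l,x_r]$ is the set of seven times continuously differentiable functions on $[x_l,x_r]$ with compact support in $(x_l,x_r)$. Integers $M\ge4$, $N\ge2$; $h=(x_r-x_l)/M$, $\tau=T/N$, $x_i=x_l+ih$, $t_n=n\tau$. A grid function is a real vector $U=(U_i)_{i=-1}^{M+1}$; $Z^0_h$ is the set of grid functions with $U_{-1}=U_0=U_1=U_{M-1}=U_M=U_{M+1}=0$ (it is assumed $u_0(x_1)=u_0(x_{M-1})=0$, so $U^0\in Z^0_h$ is consistent). Operators: $(U_x)_i=(U_{i+1}-U_i)/h$, $(U_{\bar x})_i=(U_i-U_{i-1})/h$, $(U_{\hat x})_i=(U_{i+1}-U_{i-1})/(2h)$, compound subscripts are compositions (e.g. $(U_{x\bar x})_i=(U_{i+1}-2U_i+U_{i-1})/h^2$). $(U,V)=h\sum_{i=1}^{M-1}U_iV_i$, $\|U\|^2=(U,U)$ (also applied to difference quotients, summing over $1\le i\le M-1$), $\|U\|_\infty=\max_{1\le i\le M-1}|U_i|$. For a sequence of grid functions $U^0,\dots,U^N$: $\bar U^n=(U^{n+1}+U^{n-1})/2$, $(U^n)_t=(U^{n+1}-U^{n-1})/(2\tau)$, and e.g. $(U^n)_{x\bar xt}=\big((U^{n+1}-U^{n-1})/(2\tau)\big)_{x\bar x}$, $(U^n)_{xx\bar x\bar xt}=\big((U^{n+1}-U^{n-1})/(2\tau)\big)_{xx\bar x\bar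 x}$. For grid functions $V,W$, $V^mW$ denotes $i\mapsto V_i^mW_i$. Scheme (S): for $1\le n\le N-1$ and $2\le i\le M-2$, $$(U^n)_{t,i}+a(\bar U^n)_{\hat x,i}+\tfrac{b}{m+2}\big[(U^n_i)^m(\bar U^n)_{\hat x,i}+((U^n)^m\bar U^n)_{\hat x,i}\big]+c(\bar U^n)_{x\bar x\hat x,i}-\alpha(U^n)_{x\bar xt,i}+\lambda(U^n)_{xx\bar x\bar xt,i}-\nu(\bar U^n)_{xx\bar x\bar x\hat x,i}=0.$$ Starting scheme (CN): with $W=(U^1+U^0)/2$, for $2\le i\le M-2$, $$\tfrac{U^1_i-U^0_i}{\tau}+aW_{\hat x,i}+\tfrac{b}{m+2}\big[W_i^mW_{\hat x,i}+(W^mW)_{\hat x,i}\big]-\alpha\Big(\tfrac{U^1-U^0}{\tau}\Big)_{x\bar x,i}+cW_{x\bar x\hat x,i}+\lambda\Big(\tfrac{U^1-U^0}{\tau}\Big)_{xx\bar x\bar x,i}-\nu W_{xx\bar x\bar x\hat x,i}=0.$$ *)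

(* Defs.v *)
From Stdlib Require Import Reals ZArith.
Open Scope R_scope.

(* Grid functions: Z -> R; only the indices -1..M+1 are ever used. *)
Definition grid := Z -> R.

Definition dx (h : R) (U : grid) : grid := fun i => (U (i + 1)%Z - U i) / h.
Definition dbx (h : R) (U : grid) : grid := fun i => (U i - U (i - 1)%Z) / h.
Definition dhx (h : R) (U : grid) : grid := fun i => (U (i + 1)%Z - U (i - 1)%Z) / (2 * h).

Fixpoint sum_nat (f : nat -> R) (n : nat) : R :=
  match n with O => 0 | S k => sum_nat f k + f k end.

(* max_{k=0}^{n-1} f k (with 0 as base value; used for nonnegative f) *)
Fixpoint max_nat (f : nat -> R) (n : nat) : R :=
  match n with O => 0 | S k => Rmax (max_nat f k) (f k) end.

Definition ip (M : nat) (h : R) (U V : grid) : R :=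
  h * sum_nat (fun k => U (Z.of_nat (S k)) * V (Z.of_nat (S k))) (M - 1).

Definition nrm2 (M : nat) (h : R) (U : grid) : R := ip M h U U.

Definition supn (M : nat) (U : grid) : R :=
  max_nat (fun k => Rabs (U (Z.of_nat (S k)))) (M - 1).

Definition inZ0 (M : nat) (U : grid) : Prop :=
  U (-1)%Z = 0 /\ U 0%Z = 0 /\ U 1%Z = 0 /\
  U (Z.of_nat M - 1)%Z = 0 /\ U (Z.of_nat M) = 0 /\ U (Z.of_nat M + 1)%Z = 0.

Definition scheme_S (m : nat) (a b c nu alpha lambda h tau : R)
    (U : nat -> grid) (n : nat) (i : Z) : Prop :=
  let Ub : grid := fun j => (U (S n) j + U (n - 1)%nat j) / 2 in
  let Ut : grid := fun j => (U (S n) j - U (n - 1)%nat j) / (2 * tau) in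
  Ut i + a * dhx h Ub i
  + b / (INR m + 2) * (U n i ^ m * dhx h Ub i
                       + dhx h (fun j => U n j ^ m * Ub j) i)
  + c * dhx h (dbx h (dx h Ub)) i
  - alpha * dbx h (dx h Ut) i
  + lambda * dbx h (dbx h (dx h (dx h Ut))) i
  - nu * dhx h (dbx h (dbx h (dx h (dx h Ub)))) i = 0.

Definition scheme_CN (m : nat) (a b c nu alpha lambda h tau : R)
    (U0 U1 : grid) (i : Z) : Prop :=
  let W : grid := fun j => (U1 j + U0 j) / 2 in
  let D : grid := fun j => (U1 j - U0 j) / tau in
  D i + a * dhx h W i
  + b / (INR m + 2) * (W i ^ m * dhx h W i + dhx h (fun j => W j ^ m * W j) i)
  - alpha * dbx h (dx h D) i
  + c * dhx h (dbx h (dx h W)) i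
  + lambda * dbx h (dbx h (dx h (dx h D))) i
  - nu * dhx h (dbx h (dbx h (dx h (dx h W)))) i = 0.

Definition energy (M : nat) (alpha lambda h : R) (U : nat -> grid) (n : nat) : R :=
  (nrm2 M h (U (S n)) + nrm2 M h (U n)) / 2
  + alpha * (nrm2 M h (dx h (U (S n))) + nrm2 M h (dx h (U n))) / 2
  + lambda * (nrm2 M h (dbx h (dx h (U (S n)))) + nrm2 M h (dbx h (dx h (U n)))) / 2.

Definition energy1 (M : nat) (alpha lambda h : R) (V : grid) : R :=
  nrm2 M h V + alpha * nrm2 M h (dx h V) + lambda * nrm2 M h (dbx h (dx h V)).

(* C^7_0[xl,xr]: u (extended by zero to R) is 7 times continuously
   differentiable and vanishes outside a compact [p,q] inside (xl,xr). *)
Definition C7_0 (xl xr : R) (u : R -> R) : Prop :=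
  exists D : nat -> R -> R,
    (forall x, D O x = u x) /\
    (forall k, (k < 7)%nat -> forall x, derivable_pt_lim (D k) x (D (S k) x)) /\
    continuity (D 7%nat) /\
    exists p q, xl < p /\ p <= q /\ q < xr /\
      forall x, (x < p \/ q < x) -> u x = 0.

(* Main.v *)
Require Import Defs.
From Stdlib Require Import Reals ZArith Lra Lia Psatz.
Open Scope R_scope.

Ltac is_zlit z := lazymatch z with
  | Zpos ?p => idtac | Zneg ?p => idtac | Z0 => idtac end.

Ltac zoff e i := lazymatch e with
 | i => constr:(0%Z)
 | (?a + ?b)%Z => let x := zoff a i in constr:((x + b)%Z)
 | (?a - ?b)%Z => let x := zoff a i in constr:((x - b)%Z)
 end.

Ltac normidx i := repeat match goal with
 | |- context [?f ?e] =>
    lazymatch type of e with Z => idtac end;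
    lazymatch e with
    | i => fail
    | (i + ?z)%Z => is_zlit z; fail
    | _ => let c := zoff e i in let c' := eval compute in c in
           lazymatch c' with
           | Z0 => replace e with i by ring
           | _ => replace e with (i + c')%Z by ring
           end
    end
 end.


Definition gen (m : nat) (a b c nu alpha lambda h k : R) (A B P : grid) (i : Z) : R :=
  let Ub : grid := fun j => (A j + B j) / 2 in
  let Ut : grid := fun j => (A j - B j) / k in
  Ut i + a * dhx h Ub i
  + b / (INR m + 2) * (P i ^ m * dhx h Ub i
                       + dhx h (fun j => P j ^ m * Ub j) i)
  + c * dhx h (dbx h (dx h Ub)) i
  - alpha * dbx h (dx h Ut) i
  + lambda * dbx h (dbx h (dx h (dx h Ut))) i
  - nu * dhx h (dbx h (dbx h (dx h (dx h Ub)))) i.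

Lemma gen_S m a b c nu alpha lambda h tau U n i :
  scheme_S m a b c nu alpha lambda h tau U n i ->
  gen m a b c nu alpha lambda h (2*tau) (U (S n)) (U (n-1)%nat) (U n) i = 0.
Proof. intro H; exact H. Qed.

Lemma gen_CN m a b c nu alpha lambda h tau U0 U1 i :
  scheme_CN m a b c nu alpha lambda h tau U0 U1 i ->
  gen m a b c nu alpha lambda h tau U1 U0 (fun j => (U1 j + U0 j)/2) i = 0.
Proof. unfold scheme_CN, gen; intro H. rewrite <- H. ring. Qed.

Definition Vs (A B : grid) : grid := fun j => (A j + B j) / 2.

Definition g1 (V : grid) (i : Z) : R := V i * V (i+1)%Z.
Definition g2 (P V : grid) (m : nat) (i : Z) : R :=
  P i ^ m * V i * V (i+1)%Z + P (i+1)%Z ^ m * V (i+1)%Z * V i.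
Definition g3 (V : grid) (i : Z) : R :=
  V (i+2)%Z * V i + V (i+1)%Z * V (i-1)%Z - 2 * (V (i+1)%Z * V i).
Definition g7 (V : grid) (i : Z) : R :=
  (V (i+3)%Z * V i + V (i+2)%Z * V (i-1)%Z + V (i+1)%Z * V (i-2)%Z)
  - 4 * (V (i+2)%Z * V i + V (i+1)%Z * V (i-1)%Z) + 5 * (V (i+1)%Z * V i).
Definition g5 (A B : grid) (i : Z) : R :=
  ((A (i+1)%Z - B (i+1)%Z) - (A i - B i)) * (A (i+1)%Z + B (i+1)%Z).
Definition ee (A B : grid) (j : Z) : R :=
  (A (j+1)%Z - B (j+1)%Z) - 2 * (A j - B j) + (A (j-1)%Z - B (j-1)%Z).
Definition g6 (A B : grid) (i : Z) : R :=
  ee A B (i+1)%Z * (A i + B i) - ee A B i * (A (i+1)%Z + B (i+1)%Z).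

Lemma T2 h V i : h <> 0 -> dhx h V i * V i = (g1 V i - g1 V (i-1)%Z) / (2 * h).
Proof. intro Hh. unfold dhx, g1. normidx i. field. auto. Qed.

Lemma T3 h (P V : grid) m i : h <> 0 ->
  (P i ^ m * dhx h V i + dhx h (fun j => P j ^ m * V j) i) * V i
  = (g2 P V m i - g2 P V m (i-1)%Z) / (2 * h).
Proof. intro Hh. unfold dhx, g2. normidx i. field. auto. Qed.

Lemma T4 h V i : h <> 0 ->
  dhx h (dbx h (dx h V)) i * V i = (g3 V i - g3 V (i-1)%Z) / (2 * h^3).
Proof. intro Hh. unfold dhx, dbx, dx, g3. normidx i. field. auto. Qed.

Lemma T7 h V i : h <> 0 ->
  dhx h (dbx h (dbx h (dx h (dx h V)))) i * V i = (g7 V i - g7 V (i-1)%Z) / (2 * h^5).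
Proof. intro Hh. unfold dhx, dbx, dx, g7. normidx i. field. auto. Qed.

Lemma T5 h k (A B : grid) i : h <> 0 -> k <> 0 ->
  dbx h (dx h (fun j => (A j - B j) / k)) i * ((A i + B i) / 2) * (2 * k)
  = - ((dx h A i)^2 - (dx h B i)^2) + (g5 A B i - g5 A B (i-1)%Z) / h^2.
Proof. intros Hh Hk. unfold dbx, dx, g5. normidx i. field. auto. Qed.

Lemma T6 h k (A B : grid) i : h <> 0 -> k <> 0 ->
  dbx h (dbx h (dx h (dx h (fun j => (A j - B j) / k)))) i * ((A i + B i) / 2) * (2 * k)
  = ((dbx h (dx h A) i)^2 - (dbx h (dx h B) i)^2) + (g6 A B i - g6 A B (i-1)%Z) / h^4.
Proof. intros Hh Hk. unfold dbx, dx, g6, ee. normidx i. field. auto. Qed.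

Definition Qf (alpha lambda h : R) (X : grid) (i : Z) : R :=
  X i * X i + alpha * (dx h X i * dx h X i) + lambda * (dbx h (dx h X) i * dbx h (dx h X) i).

Definition Gt (m : nat) (a b c nu alpha lambda h k : R) (A B P : grid) (i : Z) : R :=
  a * k / h * g1 (Vs A B) i + b / (INR m + 2) * k / h * g2 P (Vs A B) m i
  + c * k / h^3 * g3 (Vs A B) i - alpha / h^2 * g5 A B i
  + lambda / h^4 * g6 A B i - nu * k / h^5 * g7 (Vs A B) i.

Lemma gen_id m a b c nu alpha lambda h k A B P i : h <> 0 -> k <> 0 ->
  gen m a b c nu alpha lambda h k A B P i * Vs A B i * (2 * k)
  = Qf alpha lambda h A i - Qf alpha lambda h B i
    + (Gt m a b c nu alpha lambda h k A B P i - Gt m a b c nu alpha lambda h k A B P (i-1)%Z).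
Proof.
  intros Hh Hk.
  pose proof (T2 h (Vs A B) i Hh) as H2.
  pose proof (T3 h P (Vs A B) m i Hh) as H3.
  pose proof (T4 h (Vs A B) i Hh) as H4.
  pose proof (T5 h k A B i Hh Hk) as H5.
  pose proof (T6 h k A B i Hh Hk) as H6.
  pose proof (T7 h (Vs A B) i Hh) as H7.
  unfold Vs in H2, H3, H4, H7.
  transitivity ((A i - B i)/k * ((A i + B i)/2) * (2*k)
    + a * 2 * k * (dhx h (fun j => (A j + B j) / 2) i * ((A i + B i)/2))
    + b / (INR m + 2) * 2 * k * ((P i ^ m * dhx h (fun j => (A j + B j) / 2) i +
       dhx h (fun j => P j ^ m * ((A j + B j) / 2)) i) * ((A i + B i)/2))
    + c * 2 * k * (dhx h (dbx h (dx h (fun j => (A j + B j) / 2))) i * ((A i + B i)/2))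
    - alpha * (dbx h (dx h (fun j => (A j - B j) / k)) i * ((A i + B i) / 2) * (2 * k))
    + lambda * (dbx h (dbx h (dx h (dx h (fun j => (A j - B j) / k)))) i * ((A i + B i) / 2) * (2 * k))
    - nu * 2 * k * (dhx h (dbx h (dbx h (dx h (dx h (fun j => (A j + B j) / 2))))) i * ((A i + B i)/2))).
  { unfold gen, Vs. ring. }
  rewrite H2, H3, H4, H5, H6, H7.
  unfold Qf, Gt.
  set (beta := b / (INR m + 2)).
  change (fun j : Z => (A j + B j) / 2) with (Vs A B).
  field. auto.
Qed.

Lemma Gt_left m a b c nu alpha lambda h k (A B P : grid) j :
  A (j + -1)%Z = 0 -> A j = 0 -> A (j+1)%Z = 0 ->
  B (j + -1)%Z = 0 -> B j = 0 -> B (j+1)%Z = 0 ->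
  Gt m a b c nu alpha lambda h k A B P j = 0.
Proof.
  intros H1 H2 H3 H4 H5 H6.
  unfold Gt, g1, g2, g3, g5, g6, g7, ee, Vs. normidx j.
  rewrite ?H1, ?H2, ?H3, ?H4, ?H5, ?H6. repeat match goal with |- context [?x ^ m] => set (x ^ m) end. unfold Rdiv; ring.
Qed.

Lemma Gt_right m a b c nu alpha lambda h k (A B P : grid) j :
  A j = 0 -> A (j+1)%Z = 0 -> A (j+2)%Z = 0 ->
  B j = 0 -> B (j+1)%Z = 0 -> B (j+2)%Z = 0 ->
  Gt m a b c nu alpha lambda h k A B P j = 0.
Proof.
  intros H1 H2 H3 H4 H5 H6.
  unfold Gt, g1, g2, g3, g5, g6, g7, ee, Vs. normidx j.
  rewrite ?H1, ?H2, ?H3, ?H4, ?H5, ?H6. unfold Rdiv; ring.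
Qed.

Lemma sum_ext (f g : nat -> R) n : (forall k, (k < n)%nat -> f k = g k) -> Defs.sum_nat f n = Defs.sum_nat g n.
Proof. induction n; simpl; intros H; auto. rewrite IHn by (intros; apply H; lia). rewrite H by lia. auto. Qed.

Lemma sum_plus (f g : nat -> R) n : Defs.sum_nat (fun k => f k + g k) n = Defs.sum_nat f n + Defs.sum_nat g n.
Proof. induction n; simpl; [ring|rewrite IHn; ring]. Qed.

Lemma sum_minus (f g : nat -> R) n : Defs.sum_nat (fun k => f k - g k) n = Defs.sum_nat f n - Defs.sum_nat g n.
Proof. induction n; simpl; [ring|rewrite IHn; ring]. Qed.

Lemma sum_scal (c : R) (f : nat -> R) n : Defs.sum_nat (fun k => c * f k) n = c * Defs.sum_nat f n.
Proof. induction n; simpl; [ring|rewrite IHn; ring]. Qed.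

Lemma sum_tele (F : nat -> R) n : Defs.sum_nat (fun k => F (S k) - F k) n = F n - F O.
Proof. induction n; simpl; [ring|rewrite IHn; ring]. Qed.

Lemma sum_zero (f : nat -> R) n : (forall k, (k < n)%nat -> f k = 0) -> Defs.sum_nat f n = 0.
Proof. intro H. rewrite (sum_ext f (fun _ => 0)) by auto. clear H. induction n; simpl; [ring|rewrite IHn; ring]. Qed.

Definition inZ0' (M : nat) (U : grid) : Prop := inZ0 M U.

Lemma energy1_sum M alpha lambda h X :
  energy1 M alpha lambda h X = h * Defs.sum_nat (fun k => Qf alpha lambda h X (Z.of_nat (S k))) (M - 1).
Proof.
  unfold energy1, nrm2, ip, Qf.
  rewrite !sum_plus, !sum_scal. ring.
Qed.

Lemma conservation m a b c nu alpha lambda h k (M : nat) (A B P : grid) :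
  h <> 0 -> k <> 0 -> (4 <= M)%nat -> inZ0 M A -> inZ0 M B ->
  (forall i, (2 <= i <= Z.of_nat M - 2)%Z -> gen m a b c nu alpha lambda h k A B P i = 0) ->
  energy1 M alpha lambda h A = energy1 M alpha lambda h B.
Proof.
  intros Hh Hk HM [A1 [A2 [A3 [A4 [A5 A6]]]]] [B1 [B2 [B3 [B4 [B5 B6]]]]] Hs.
  set (G := Gt m a b c nu alpha lambda h k A B P).
  assert (Hz : Defs.sum_nat (fun k0 => gen m a b c nu alpha lambda h k A B P (Z.of_nat (S k0))
                  * Vs A B (Z.of_nat (S k0)) * (2 * k)) (M - 1) = 0).
  { apply sum_zero. intros k0 Hk0.
    destruct (Nat.eq_dec k0 0) as [->|Hne].
    - simpl. unfold Vs. rewrite A3, B3. field.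
    - destruct (Nat.eq_dec k0 (M - 2)) as [->|Hne2].
      + replace (Z.of_nat (S (M - 2))) with (Z.of_nat M - 1)%Z by lia.
        unfold Vs. rewrite A4, B4. field.
      + rewrite Hs by lia. ring. }
  rewrite (sum_ext _ (fun k0 => (Qf alpha lambda h A (Z.of_nat (S k0)) - Qf alpha lambda h B (Z.of_nat (S k0)))
        + ((fun n => G (Z.of_nat n)) (S k0) - (fun n => G (Z.of_nat n)) k0))) in Hz.
  2:{ intros k0 _. rewrite gen_id by auto. cbv beta. fold G.
      replace (Z.of_nat (S k0) - 1)%Z with (Z.of_nat k0) by lia. reflexivity. }
  pose proof (sum_tele (fun n => G (Z.of_nat n)) (M-1)) as HT; cbv beta in HT.
  rewrite sum_plus, sum_minus, HT in Hz.
  assert (HG0 : G (Z.of_nat 0) = 0).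
  { apply Gt_left; assumption. }
  assert (HGM : G (Z.of_nat (M - 1)) = 0).
  { replace (Z.of_nat (M - 1)) with (Z.of_nat M - 1)%Z by lia.
    apply Gt_right.
    - exact A4. - replace (Z.of_nat M - 1 + 1)%Z with (Z.of_nat M) by ring. exact A5.
    - replace (Z.of_nat M - 1 + 2)%Z with (Z.of_nat M + 1)%Z by ring. exact A6.
    - exact B4. - replace (Z.of_nat M - 1 + 1)%Z with (Z.of_nat M) by ring. exact B5.
    - replace (Z.of_nat M - 1 + 2)%Z with (Z.of_nat M + 1)%Z by ring. exact B6. }
  rewrite HG0, HGM in Hz.
  rewrite !energy1_sum.
  assert (Defs.sum_nat (fun k0 => Qf alpha lambda h A (Z.of_nat (S k0))) (M - 1) =
          Defs.sum_nat (fun k0 => Qf alpha lambda h B (Z.of_nat (S k0))) (M - 1)) as ->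
    by lra.
  reflexivity.
Qed.

Lemma energy_split M alpha lambda h U n :
  energy M alpha lambda h U n =
  (energy1 M alpha lambda h (U (S n)) + energy1 M alpha lambda h (U n)) / 2.
Proof. unfold energy, energy1. field. Qed.

Lemma part1 m a b c nu alpha lambda (M N : nat) (U : nat -> grid) h tau :
  h <> 0 -> tau <> 0 -> (4 <= M)%nat ->
  (forall n, (n <= N)%nat -> inZ0 M (U n)) ->
  (forall n, (1 <= n <= N - 1)%nat ->
     forall i, (2 <= i <= Z.of_nat M - 2)%Z ->
       scheme_S m a b c nu alpha lambda h tau U n i) ->
  forall n, (n <= N - 1)%nat ->
    energy M alpha lambda h U n = energy M alpha lambda h U 0.
Proof.
  intros Hh Ht HM HZ HS n. induction n as [|n IH]; intros Hn; [reflexivity|].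
  rewrite <- IH by lia. rewrite !energy_split.
  assert (E : energy1 M alpha lambda h (U (S (S n))) = energy1 M alpha lambda h (U n)).
  { replace (U n) with (U (S n - 1)%nat) by (f_equal; lia).
    apply (conservation m a b c nu alpha lambda h (2*tau) M _ _ (U (S n)));
      [exact Hh | intro H; apply Ht; lra | exact HM | apply HZ; lia | apply HZ; lia |
       intros i Hi; apply gen_S; apply HS; [lia | exact Hi]]. }
  rewrite E. unfold Rdiv; ring.
Qed.

Lemma sum_shift (f : nat -> R) n : Defs.sum_nat f (S n) = f O + Defs.sum_nat (fun k => f (S k)) n.
Proof. induction n; simpl in *; [ring|rewrite IHn; ring]. Qed.

Lemma sum_nonneg (f : nat -> R) n : (forall k, 0 <= f k) -> 0 <= Defs.sum_nat f n.
Proof. intro H; induction n; simpl; [lra|specialize (H n); lra]. Qed.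

Lemma sum_mono_len (f : nat -> R) n p : (forall k, 0 <= f k) -> (n <= p)%nat ->
  Defs.sum_nat f n <= Defs.sum_nat f p.
Proof. intros H Hnp. induction Hnp; simpl; [lra|specialize (H m); lra]. Qed.

Lemma sum_le_const (f : nat -> R) n c : (forall k, (k < n)%nat -> f k <= c) ->
  Defs.sum_nat f n <= INR n * c.
Proof.
  induction n; intros H; simpl Defs.sum_nat; [simpl; lra|].
  rewrite S_INR. assert (IH := IHn (fun k Hk => H k ltac:(lia))). specialize (H n ltac:(lia)). lra.
Qed.

Lemma cauchy_schwarz (f : nat -> R) n :
  (Defs.sum_nat f n)^2 <= INR n * Defs.sum_nat (fun k => f k * f k) n.
Proof.
  induction n; simpl Defs.sum_nat; [simpl; lra|].
  rewrite S_INR.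
  set (S0 := Defs.sum_nat f n) in *.
  set (Q := Defs.sum_nat (fun k => f k * f k) n) in *.
  set (x := f n).
  assert (HQ : 0 <= Q) by (apply sum_nonneg; intro; nra).
  destruct n.
  - simpl in *. unfold S0, Q. simpl. nra.
  - assert (Hn : 0 < INR (S n)) by (apply lt_0_INR; lia).
    set (r := INR (S n)) in *.
    assert (H0 := pow2_ge_0 (S0 - r*x)).
    assert (r * (Q + r * x * x - 2 * S0 * x) >= 0) by nra.
    assert (Q + r * x * x - 2 * S0 * x >= 0).
    { destruct (Rlt_or_le (Q + r * x * x - 2 * S0 * x) 0); [|lra]. nra. }
    nra.
Qed.

Lemma max_nat_le (f : nat -> R) n C : 0 <= C -> (forall k, (k < n)%nat -> f k <= C) -> max_nat f n <= C.
Proof.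
  intros HC. induction n; intros H; simpl; [lra|].
  apply Rmax_lub; [apply IHn; intros; apply H; lia | apply H; lia].
Qed.

Lemma sob0 (M : nat) h (X : grid) i : 0 < h -> inZ0 M X -> (1 <= M)%nat -> (i <= M)%nat ->
  (X (Z.of_nat i))^2 <= h * INR M * nrm2 M h (dx h X).
Proof.
  intros Hh [X1 [X2 [X3 [X4 [X5 X6]]]]] HM Hi.
  set (a := fun k => dx h X (Z.of_nat k)).
  assert (tel : X (Z.of_nat i) = h * Defs.sum_nat a i).
  { rewrite <- sum_scal.
    rewrite (sum_ext _ (fun k => X (Z.of_nat (S k)) - X (Z.of_nat k))).
    - pose proof (sum_tele (fun k => X (Z.of_nat k)) i) as HT. cbv beta in HT.
      rewrite HT. change (Z.of_nat 0) with 0%Z. rewrite X2. ring.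
    - intros k _. unfold a, dx. rewrite Nat2Z.inj_succ. unfold Z.succ. field. lra. }
  rewrite tel.
  assert (cs := cauchy_schwarz a i).
  assert (m1 := sum_mono_len (fun k => a k * a k) i M (fun k => ltac:(nra)) Hi).
  assert (sh : Defs.sum_nat (fun k => a k * a k) M = Defs.sum_nat (fun k => a (S k) * a (S k)) (M-1)).
  { replace M with (S (M - 1)) at 1 by lia. rewrite sum_shift.
    assert (a 0%nat = 0) as ->. { unfold a, dx. simpl. rewrite X2, X3. field. lra. }
    ring. }
  assert (Hq : 0 <= Defs.sum_nat (fun k => a k * a k) i) by (apply sum_nonneg; intro; nra).
  assert (HiM : INR i <= INR M) by (apply le_INR; exact Hi).
  assert (HM0 : 0 <= INR i) by apply pos_INR.
  unfold nrm2, ip. fold a.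
  change (Defs.sum_nat (fun k : nat => dx h X (Z.of_nat (S k)) * dx h X (Z.of_nat (S k))) (M - 1))
    with (Defs.sum_nat (fun k => a (S k) * a (S k)) (M-1)).
  rewrite <- sh.
  set (S0 := Defs.sum_nat a i) in *.
  set (Q := Defs.sum_nat (fun k => a k * a k) i) in *.
  set (QM := Defs.sum_nat (fun k => a k * a k) M) in *.
  assert (INR i * Q <= INR M * QM) by nra.
  assert (h * S0 * (h * S0) <= h * h * (INR M * QM)) by nra.
  nra.
Qed.

Lemma sob1 (M : nat) h (X : grid) i : 0 < h -> inZ0 M X -> (1 <= M)%nat -> (i <= M - 1)%nat ->
  (dx h X (Z.of_nat i))^2 <= h * INR M * nrm2 M h (dbx h (dx h X)).
Proof.
  intros Hh [X1 [X2 [X3 [X4 [X5 X6]]]]] HM Hi.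
  set (b := fun k => dbx h (dx h X) (Z.of_nat (S k))).
  assert (tel : dx h X (Z.of_nat i) = h * Defs.sum_nat b i).
  { rewrite <- sum_scal.
    rewrite (sum_ext _ (fun k => dx h X (Z.of_nat (S k)) - dx h X (Z.of_nat k))).
    - pose proof (sum_tele (fun k => dx h X (Z.of_nat k)) i) as HT. cbv beta in HT.
      rewrite HT.
      assert (dx h X (Z.of_nat 0) = 0) as ->. { unfold dx. simpl. rewrite X2, X3. field. lra. }
      ring.
    - intros k _. unfold b, dbx.
      replace (Z.of_nat (S k) - 1)%Z with (Z.of_nat k) by lia. field. lra. }
  rewrite tel.
  assert (cs := cauchy_schwarz b i).
  assert (m1 := sum_mono_len (fun k => b k * b k) i (M-1) (fun k => ltac:(nra)) Hi).
  assert (Hq : 0 <= Defs.sum_nat (fun k => b k * b k) i) by (apply sum_nonneg; intro; nra).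
  assert (HiM : INR i <= INR M) by (apply le_INR; lia).
  assert (HM0 : 0 <= INR i) by apply pos_INR.
  unfold nrm2, ip.
  change (Defs.sum_nat (fun k : nat => dbx h (dx h X) (Z.of_nat (S k)) * dbx h (dx h X) (Z.of_nat (S k))) (M - 1))
    with (Defs.sum_nat (fun k => b k * b k) (M-1)).
  set (S0 := Defs.sum_nat b i) in *.
  set (Q := Defs.sum_nat (fun k => b k * b k) i) in *.
  set (QM := Defs.sum_nat (fun k => b k * b k) (M-1)) in *.
  assert (INR i * Q <= INR M * QM) by nra.
  assert (h * S0 * (h * S0) <= h * h * (INR M * QM)) by nra.
  nra.
Qed.

Lemma cont_bound (f : R -> R) a b : a <= b -> (forall x, continuity_pt f x) ->
  exists B, 0 <= B /\ forall x, a <= x <= b -> Rabs (f x) <= B.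
Proof.
  intros Hab Hc.
  destruct (continuity_ab_maj f a b Hab (fun x _ => Hc x)) as [Mx [HM _]].
  destruct (continuity_ab_min f a b Hab (fun x _ => Hc x)) as [mx [Hm _]].
  exists (Rabs (f Mx) + Rabs (f mx)). split.
  - pose proof (Rabs_pos (f Mx)); pose proof (Rabs_pos (f mx)); lra.
  - intros x Hx. specialize (HM x Hx). specialize (Hm x Hx).
    pose proof (Rle_abs (f Mx)). pose proof (Rabs_pos (f Mx)).
    pose proof (Rabs_pos (f mx)).
    pose proof (Rle_abs (- f mx)) as Hmm. rewrite Rabs_Ropp in Hmm.
    apply Rabs_le. lra.
Qed.

Lemma sq_le_of_abs x B : Rabs x <= B -> x * x <= B * B.
Proof. unfold Rabs; destruct Rcase_abs; intros; nra. Qed.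

Lemma abs_le_sqrt x y : x * x <= y -> Rabs x <= sqrt y.
Proof.
  intro H. rewrite <- sqrt_Rsqr_abs. apply sqrt_le_1_alt. unfold Rsqr. exact H.
Qed.

Lemma nrm2_nonneg M h X : 0 < h -> 0 <= nrm2 M h X.
Proof. intro Hh. unfold nrm2, ip. apply Rmult_le_pos; [lra|]. apply sum_nonneg. intro; nra. Qed.

Definition U0hyp (xl xr h : R) (M : nat) (D : nat -> R -> R) (U0 : grid) : Prop :=
  0 < h /\ INR M * h = xr - xl /\
  (forall x, derivable_pt_lim (D 0%nat) x (D 1%nat x)) /\
  (forall x, derivable_pt_lim (D 1%nat) x (D 2%nat x)) /\
  (forall i, (0 <= i <= Z.of_nat M)%Z -> U0 i = D 0%nat (xl + IZR i * h)).

Lemma grid_in xl xr h M i : 0 < h -> INR M * h = xr - xl ->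
  (0 <= i <= Z.of_nat M)%Z -> xl <= xl + IZR i * h <= xr.
Proof.
  intros Hh HMh Hi. assert (0 <= IZR i) by (apply IZR_le; lia).
  assert (IZR i <= INR M) by (rewrite INR_IZR_INZ; apply IZR_le; lia).
  split; nra.
Qed.

Lemma mvt_dx xl xr h M D U0 i : U0hyp xl xr h M D U0 -> (0 <= i)%Z -> (i + 1 <= Z.of_nat M)%Z ->
  exists c, xl + IZR i * h < c < xl + IZR i * h + h /\ dx h U0 i = D 1%nat c.
Proof.
  intros [Hh [HMh [HD01 [HD12 HU]]]] H1 H2.
  destruct (MVT_cor2 (D 0%nat) (D 1%nat) (xl + IZR i * h) (xl + IZR i * h + h) ltac:(lra)
     (fun c _ => HD01 c)) as [c [Hc1 Hc2]].
  exists c. split; [exact Hc2|].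
  unfold dx. rewrite !HU by lia. rewrite plus_IZR.
  replace (xl + (IZR i + 1) * h) with (xl + IZR i * h + h) by ring.
  rewrite Hc1. field. lra.
Qed.

Lemma mvt_d2 xl xr h M D U0 i : U0hyp xl xr h M D U0 -> (1 <= i)%Z -> (i + 1 <= Z.of_nat M)%Z ->
  exists c, xl <= c <= xr /\ Rabs (dbx h (dx h U0) i) <= 2 * Rabs (D 2%nat c).
Proof.
  intros HH H1 H2. pose proof HH as [Hh [HMh [HD01 [HD12 HU]]]].
  destruct (mvt_dx xl xr h M D U0 i HH ltac:(lia) H2) as [c2 [Hc2 E2]].
  destruct (mvt_dx xl xr h M D U0 (i-1) HH ltac:(lia) ltac:(lia)) as [c1 [Hc1 E1]].
  rewrite minus_IZR in Hc1.
  assert (c1 < c2) by lra.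
  destruct (MVT_cor2 (D 1%nat) (D 2%nat) c1 c2 H (fun c _ => HD12 c)) as [c [Hc Hcc]].
  pose proof (grid_in xl xr h M (i-1) Hh HMh ltac:(lia)) as G1.
  pose proof (grid_in xl xr h M (i+1) Hh HMh ltac:(lia)) as G2.
  rewrite minus_IZR in G1. rewrite plus_IZR in G2.
  exists c. split; [lra|].
  unfold dbx. rewrite E2, E1, Hc.
  replace (D 2%nat c * (c2 - c1) / h) with (D 2%nat c * ((c2 - c1) / h)) by (field; lra).
  rewrite Rabs_mult. rewrite (Rabs_right ((c2 - c1)/h)).
  2:{ apply Rle_ge. apply Rmult_le_pos; [lra|]. left; apply Rinv_0_lt_compat; lra. }
  assert ((c2 - c1) / h <= 2).
  { apply (Rmult_le_reg_r h); [lra|]. unfold Rdiv. rewrite Rmult_assoc, Rinv_l by lra. lra. }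
  pose proof (Rabs_pos (D 2%nat c)). nra.
Qed.

Lemma U0_energy xl xr h M D U0 B0 B1 B2 alpha lambda :
  U0hyp xl xr h M D U0 -> 0 <= alpha -> 0 <= lambda -> (1 <= M)%nat ->
  (forall x, xl <= x <= xr -> Rabs (D 0%nat x) <= B0) ->
  (forall x, xl <= x <= xr -> Rabs (D 1%nat x) <= B1) ->
  (forall x, xl <= x <= xr -> Rabs (D 2%nat x) <= B2) ->
  energy1 M alpha lambda h U0 <= (xr - xl) * (B0 * B0 + alpha * (B1 * B1) + lambda * ((2 * B2) * (2 * B2))).
Proof.
  intros HH Ha Hl HM HB0 HB1 HB2. pose proof HH as [Hh [HMh [HD01 [HD12 HU]]]].
  set (K := B0 * B0 + alpha * (B1 * B1) + lambda * ((2 * B2) * (2 * B2))).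
  rewrite energy1_sum.
  assert (Hs : Defs.sum_nat (fun k => Qf alpha lambda h U0 (Z.of_nat (S k))) (M - 1) <= INR (M - 1) * K).
  { apply sum_le_const. intros k Hk. unfold Qf, K.
    set (i := Z.of_nat (S k)).
    assert (Hi1 : (1 <= i)%Z) by (unfold i; lia).
    assert (Hi2 : (i + 1 <= Z.of_nat M)%Z) by (unfold i; lia).
    assert (A0 : U0 i * U0 i <= B0 * B0).
    { apply sq_le_of_abs. rewrite HU by lia. apply HB0. apply (grid_in xl xr h M); auto; lia. }
    assert (A1 : dx h U0 i * dx h U0 i <= B1 * B1).
    { apply sq_le_of_abs. destruct (mvt_dx xl xr h M D U0 i HH ltac:(lia) Hi2) as [c [Hc ->]].
      apply HB1. pose proof (grid_in xl xr h M i Hh HMh ltac:(lia)).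
      pose proof (grid_in xl xr h M (i+1) Hh HMh ltac:(lia)). rewrite plus_IZR in H0. lra. }
    assert (A2 : dbx h (dx h U0) i * dbx h (dx h U0) i <= (2 * B2) * (2 * B2)).
    { apply sq_le_of_abs. destruct (mvt_d2 xl xr h M D U0 i HH Hi1 Hi2) as [c [Hc Hb]].
      specialize (HB2 c Hc). lra. }
    assert (alpha * (dx h U0 i * dx h U0 i) <= alpha * (B1 * B1)) by (apply Rmult_le_compat_l; auto).
    assert (lambda * (dbx h (dx h U0) i * dbx h (dx h U0) i) <= lambda * ((2 * B2) * (2 * B2)))
      by (apply Rmult_le_compat_l; auto).
    lra. }
  assert (HK : 0 <= K) by (unfold K; nra).
  assert (HM1 : INR (M - 1) <= INR M) by (apply le_INR; lia).
  assert (h * Defs.sum_nat (fun k => Qf alpha lambda h U0 (Z.of_nat (S k))) (M - 1) <= h * (INR (M-1) * K))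
    by (apply Rmult_le_compat_l; lra).
  assert (0 <= h * K * (INR M - INR (M-1))) by (apply Rmult_le_pos; [apply Rmult_le_pos|]; lra).
  rewrite <- HMh. nra.
Qed.

Lemma energy1_parts M alpha lambda h X : 0 < h -> 0 < alpha -> 0 < lambda ->
  0 <= energy1 M alpha lambda h X /\
  alpha * nrm2 M h (dx h X) <= energy1 M alpha lambda h X /\
  lambda * nrm2 M h (dbx h (dx h X)) <= energy1 M alpha lambda h X.
Proof.
  intros Hh Ha Hl. unfold energy1.
  pose proof (nrm2_nonneg M h X Hh). pose proof (nrm2_nonneg M h (dx h X) Hh).
  pose proof (nrm2_nonneg M h (dbx h (dx h X)) Hh). nra.
Qed.

Theorem theorem2 (m : nat) (a b c nu alpha lambda xl xr T : R) (u0 : R -> R)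
  (hm : (1 <= m)%nat) (halpha : 0 < alpha) (hlambda : 0 < lambda)
  (hx : xl < xr) (hT : 0 < T) (hu0 : C7_0 xl xr u0) :
  (* (i) *)
  (forall (M N : nat) (U : nat -> grid),
     (4 <= M)%nat -> (2 <= N)%nat ->
     let h := (xr - xl) / INR M in
     let tau := T / INR N in
     (forall n, (n <= N)%nat -> inZ0 M (U n)) ->
     (forall n, (1 <= n <= N - 1)%nat ->
        forall i, (2 <= i <= Z.of_nat M - 2)%Z ->
          scheme_S m a b c nu alpha lambda h tau U n i) ->
     forall n, (n <= N - 1)%nat ->
       energy M alpha lambda h U n = energy M alpha lambda h U 0)
  /\
  (* (ii) *)
  (exists C, 0 < C /\
   forall (M N : nat) (U : nat -> grid),
     (4 <= M)%nat -> (2 <= N)%nat ->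
     let h := (xr - xl) / INR M in
     let tau := T / INR N in
     (forall n, (n <= N)%nat -> inZ0 M (U n)) ->
     (forall i, (0 <= i <= Z.of_nat M)%Z -> U O i = u0 (xl + IZR i * h)) ->
     (forall i, (2 <= i <= Z.of_nat M - 2)%Z ->
        scheme_CN m a b c nu alpha lambda h tau (U O) (U 1%nat) i) ->
     (forall n, (1 <= n <= N - 1)%nat ->
        forall i, (2 <= i <= Z.of_nat M - 2)%Z ->
          scheme_S m a b c nu alpha lambda h tau U n i) ->
     energy1 M alpha lambda h (U 1%nat) = energy1 M alpha lambda h (U O) /\
     forall n, (n <= N)%nat ->
       supn M (U n) <= C /\ supn M (dx h (U n)) <= C).
Proof.
  assert (Hpos : forall M N : nat, (4 <= M)%nat -> (2 <= N)%nat ->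
            0 < (xr - xl) / INR M /\ 0 < T / INR N /\ INR M * ((xr - xl) / INR M) = xr - xl).
  { intros M N HM HN.
    assert (0 < INR M) by (apply lt_0_INR; lia).
    assert (0 < INR N) by (apply lt_0_INR; lia).
    split; [apply Rdiv_lt_0_compat; lra|]. split; [apply Rdiv_lt_0_compat; lra|]. field. lra. }
  split.
  - intros M N U HM HN h tau HZ HS n Hn.
    destruct (Hpos M N HM HN) as [Hh [Ht _]]. fold h in Hh. fold tau in Ht.
    apply (part1 m a b c nu alpha lambda M N U h tau); auto; lra.
  - destruct hu0 as [D [HD0 [Hder [Hc7 _]]]].
    assert (Hcont : forall k, (k < 7)%nat -> forall x, continuity_pt (D k) x).
    { intros k Hk x. apply (derivable_continuous_pt (D k) x (exist _ (D (S k) x) (Hder k Hk x))). }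
    destruct (cont_bound (D 0%nat) xl xr ltac:(lra) (Hcont 0%nat ltac:(lia))) as [B0 [HB0p HB0]].
    destruct (cont_bound (D 1%nat) xl xr ltac:(lra) (Hcont 1%nat ltac:(lia))) as [B1 [HB1p HB1]].
    destruct (cont_bound (D 2%nat) xl xr ltac:(lra) (Hcont 2%nat ltac:(lia))) as [B2 [HB2p HB2]].
    set (K0 := (xr - xl) * (B0 * B0 + alpha * (B1 * B1) + lambda * ((2 * B2) * (2 * B2)))).
    assert (HK0 : 0 <= K0).
    { unfold K0. apply Rmult_le_pos; [lra|]. nra. }
    set (C := 1 + sqrt ((xr - xl) * (2 * K0 / alpha)) + sqrt ((xr - xl) * (2 * K0 / lambda))).
    exists C. split.
    { unfold C. pose proof (sqrt_pos ((xr - xl) * (2 * K0 / alpha))).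
      pose proof (sqrt_pos ((xr - xl) * (2 * K0 / lambda))). lra. }
    intros M N U HM HN h tau HZ HU0 HCN HS.
    destruct (Hpos M N HM HN) as [Hh [Ht HMh]]. fold h in Hh, HMh. fold tau in Ht.
    assert (E1 : energy1 M alpha lambda h (U 1%nat) = energy1 M alpha lambda h (U O)).
    { apply (conservation m a b c nu alpha lambda h tau M (U 1%nat) (U O)
               (fun j => (U 1%nat j + U O j) / 2)); try lra; auto.
      - apply HZ; lia.
      - apply HZ; lia.
      - intros i Hi. apply gen_CN. apply HCN. exact Hi. }
    split; [exact E1|].
    assert (HE0 : energy1 M alpha lambda h (U O) <= K0).
    { apply (U0_energy xl xr h M D (U O)); auto; try lra; try lia.
      split; [exact Hh|]. split; [exact HMh|]. split; [apply Hder; lia|].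
      split; [apply Hder; lia|].
      intros i Hi. rewrite HU0 by exact Hi. symmetry. apply HD0. }
    assert (HEn : forall n, (n <= N)%nat -> energy1 M alpha lambda h (U n) <= 2 * K0).
    { intros n Hn. destruct n as [|n].
      - lra.
      - assert (Hp := part1 m a b c nu alpha lambda M N U h tau ltac:(lra) ltac:(lra) HM HZ HS n ltac:(lia)).
        rewrite !energy_split, E1 in Hp.
        destruct (energy1_parts M alpha lambda h (U n) Hh halpha hlambda) as [Hn0 _].
        lra. }
    intros n Hn.
    specialize (HEn n Hn).
    destruct (energy1_parts M alpha lambda h (U n) Hh halpha hlambda) as [_ [Ha Hl]].
    assert (Hdx : nrm2 M h (dx h (U n)) <= 2 * K0 / alpha).
    { apply (Rmult_le_reg_l alpha); [lra|]. unfold Rdiv. rewrite <- Rmult_assoc.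
      rewrite (Rmult_comm alpha (2 * K0)), Rmult_assoc, Rinv_r by lra. lra. }
    assert (Hd2 : nrm2 M h (dbx h (dx h (U n))) <= 2 * K0 / lambda).
    { apply (Rmult_le_reg_l lambda); [lra|]. unfold Rdiv. rewrite <- Rmult_assoc.
      rewrite (Rmult_comm lambda (2 * K0)), Rmult_assoc, Rinv_r by lra. lra. }
    assert (HC1 : sqrt ((xr - xl) * (2 * K0 / alpha)) <= C).
    { unfold C. pose proof (sqrt_pos ((xr - xl) * (2 * K0 / lambda))). lra. }
    assert (HC2 : sqrt ((xr - xl) * (2 * K0 / lambda)) <= C).
    { unfold C. pose proof (sqrt_pos ((xr - xl) * (2 * K0 / alpha))). lra. }
    assert (HC0 : 0 <= C) by (unfold C; pose proof (sqrt_pos ((xr - xl) * (2 * K0 / alpha)));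
                              pose proof (sqrt_pos ((xr - xl) * (2 * K0 / lambda))); lra).
    split; unfold supn; apply max_nat_le; auto; intros k Hk.
    + apply Rle_trans with (2 := HC1). apply abs_le_sqrt.
      pose proof (sob0 M h (U n) (S k) Hh (HZ n Hn) ltac:(lia) ltac:(lia)) as Hs.
      replace (h * INR M) with (xr - xl) in Hs by (rewrite <- HMh; ring).
      assert ((xr - xl) * nrm2 M h (dx h (U n)) <= (xr - xl) * (2 * K0 / alpha))
        by (apply Rmult_le_compat_l; lra).
      nra.
    + apply Rle_trans with (2 := HC2). apply abs_le_sqrt.
      pose proof (sob1 M h (U n) (S k) Hh (HZ n Hn) ltac:(lia) ltac:(lia)) as Hs.
      replace (h * INR M) with (xr - xl) in Hs by (rewrite <- HMh; ring).
      assert ((xr - xl) * nrm2 M h (dbx h (dx h (U n))) <= (xr - xl) * (2 * K0 / lambda))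
        by (apply Rmult_le_compat_l; lra).
      nra.
Qed.
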